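(* Let $x\in\mathbb{R}^d$, $d\ge1$, and run the following procedure. Compute $(\theta,p)=\mathrm{csa}_{\text{even}}(x)$. If $\theta^\top\Pi_{[0,1]^d}(x)\le p$, stop. Otherwise set $R:=\{1,\dots,d\}$, $q:=p$ and repeat the following loop: if $|R|=1$, stop; compute $v_R := x_R - \frac{\theta_R^\top x_R - q}{|R|}\theta_R$; let $S := \{j\in R : (v_j>1 \text{ and } \theta_j=1) \text{ or } (v_j<0\text{ and }\theta_j=-1)\}$; if $S=\emptyset$, stop; otherwise replace $q$ by $q - |\{j\in S:\theta_j=1\}|$ and $R$ by $R\setminus S$, and repeat. Then $R$ never becomes empty, i.e. in every execution of the loop $S\neq R$.
   Context: For $R\subseteq\{1,\dots,d\}$ and $u\in\mathbb{R}^d$, $u_R$ denotes the subvector $(u_j)_{j\in R}$; $\Pi_{[0,1]^d}$ is componentwise clipping to $[0,1]$. $\mathrm{csa}_{\text{even}}(x)$: set $\theta_j=1$ if $x_j>1/2$ and $\theta_j=-1$ otherwise; if $|\{j:\theta_j=1\}|$ is even, choose $j^*\in\arg\min_j|x_j-1/2|$ and replace $\theta_{j^*}$ by $-\theta_{j^*}$; set $p=|\{j:\theta_j=1\}|-1$; output $(\theta,p)$. (This is the paper's Algorithm 1, where $|R|$ is the variable $l$.) *)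

(* Defs.v *)
From HB Require Import structures.
From mathcomp Require Import all_boot all_order all_algebra.
From mathcomp Require Import reals.
Set Implicit Arguments. Unset Strict Implicit. Unset Printing Implicit Defensive.
Import Order.TTheory GRing.Theory Num.Theory.
Local Open Scope ring_scope.

Section CSA.
Variables (R : realType) (d : nat) (x : 'I_d -> R) (jstar : 'I_d).

Definition theta0 (j : 'I_d) : R := if x j > 2^-1 then 1 else -1.

(* csa_even(x), with the tie-breaking index j* supplied explicitly
   (the theorem requires j* to be a minimiser of |x_j - 1/2|) *)
Definition csa_theta (j : 'I_d) : R :=
  if ~~ odd #|[set i | theta0 i == 1]| && (j == jstar) then - theta0 j
  else theta0 j.

Definition csa_p : R := (#|[set i | csa_theta i == 1]|)%:R - 1.

Definition clip01 (y : R) : R := Num.min (Num.max y 0) 1.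

Definition initial_stop : bool :=
  \sum_(j < d) csa_theta j * clip01 (x j) <= csa_p.

Definition vR (Rs : {set 'I_d}) (q : R) (j : 'I_d) : R :=
  x j - ((\sum_(i in Rs) csa_theta i * x i) - q) / (#|Rs|)%:R * csa_theta j.

Definition Sset (Rs : {set 'I_d}) (q : R) : {set 'I_d} :=
  [set j in Rs | ((vR Rs q j > 1) && (csa_theta j == 1))
              || ((vR Rs q j < 0) && (csa_theta j == -1))].

Definition loop_step (st : {set 'I_d} * R) : {set 'I_d} * R :=
  let S := Sset st.1 st.2 in
  (st.1 :\: S, st.2 - (#|[set j in S | csa_theta j == 1]|)%:R).

Definition loop_continues (st : {set 'I_d} * R) : bool :=
  (#|st.1| != 1%N) && (Sset st.1 st.2 != set0).

Definition loop_state (n : nat) : {set 'I_d} * R :=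
  iter n loop_step (setT, csa_p).

End CSA.

(* Main.v *)
Require Import Defs.
From HB Require Import structures.
From mathcomp Require Import all_boot all_order all_algebra.
From mathcomp Require Import reals.
From mathcomp Require Import ring.
Import Order.TTheory GRing.Theory Num.Theory.
Local Open Scope ring_scope.

Section Aux.
Variables (R : realType) (d : nat) (x : 'I_d -> R) (jstar : 'I_d).
Local Notation th := (csa_theta x jstar).

Lemma th_cases j : th j = 1 \/ th j = -1.
Proof.
rewrite /csa_theta /theta0; case: ifP => _; case: ifP => _;
  rewrite ?opprK; auto.
Qed.

Lemma th_sq j : th j * th j = 1.
Proof. by case: (th_cases j) => ->; rewrite ?mulr1 ?mulrNN ?mulr1. Qed.

Lemma cardP (Rs : {set 'I_d}) :
  (#|[set j in Rs | th j == 1]|)%:R = \sum_(i in Rs) ((th i == 1)%:R : R).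
Proof.
rewrite (eq_bigr (fun i => if th i == 1 then 1 else 0)); last by move=> i _; case: (th i == 1).
rewrite -big_mkcondr /= -sumr_const.
by apply: eq_bigl => i; rewrite inE.
Qed.

Lemma sum_thv (Rs : {set 'I_d}) q : Rs != set0 ->
  \sum_(i in Rs) th i * vR x jstar Rs q i = q.
Proof.
move=> ne.
have cn : (#|Rs|)%:R != 0 :> R.
  by rewrite pnatr_eq0 -lt0n card_gt0.
set c := ((\sum_(i in Rs) th i * x i) - q) / (#|Rs|)%:R.
rewrite /vR -/c.
under eq_bigr => i _ do rewrite mulrBr (mulrC c) mulrA th_sq mul1r.
rewrite sumrB sumr_const -mulr_natr /c divfK //.
by rewrite opprB addrC subrK.
Qed.

Lemma S_neq (Rs : {set 'I_d}) q : Rs != set0 ->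
  q = (#|[set j in Rs | th j == 1]|)%:R - 1 ->
  Sset x jstar Rs q != Rs.
Proof.
move=> ne hq; apply/eqP => hS.
have key : \sum_(i in Rs) ((th i == 1)%:R : R) <= \sum_(i in Rs) th i * vR x jstar Rs q i.
  apply: ler_sum => i iR.
  have : i \in Sset x jstar Rs q by rewrite hS.
  rewrite inE iR /= => /orP [/andP [h1 /eqP h2] | /andP [h1 /eqP h2]].
    by rewrite h2 eqxx mul1r ltW.
  have -> : (th i == 1) = false by rewrite h2 eq_sym -addr_eq0 (_ : 1 + 1 = 2%:R) // pnatr_eq0.
  by rewrite h2 mulN1r oppr_ge0 ltW.
move: key; rewrite sum_thv // hq cardP.
by rewrite -subr_ge0 addrAC subrr add0r ler0N1.
Qed.

Lemma state_inv n (hd : (0 < d)%N) :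
  (loop_state x jstar n).1 != set0 /\
  (loop_state x jstar n).2 =
    (#|[set j in (loop_state x jstar n).1 | th j == 1]|)%:R - 1.
Proof.
elim: n => [|n [ne hq]].
  split; first by apply/set0Pn; exists (Ordinal hd); rewrite inE.
  rewrite /= /csa_p; congr (_%:R - 1); apply: eq_card => i; by rewrite !inE.
rewrite /loop_state iterS -/(loop_state x jstar n) /loop_step /=.
set Rs := (loop_state x jstar n).1 in ne hq *.
set q := (loop_state x jstar n).2 in hq *.
have sub : Sset x jstar Rs q \subset Rs by apply/subsetP => i; rewrite inE => /andP [].
split.
  move: (S_neq _ _ ne hq); apply: contra; rewrite setD_eq0 => h.
  by rewrite eqEsubset sub h.
rewrite {1}hq !cardP (big_setID (Sset x jstar Rs q)) /= (setIidPr sub).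
set a := \sum_(i in Sset x jstar Rs q) _.
set b := \sum_(i in Rs :\: Sset x jstar Rs q) _.
ring.
Qed.
End Aux.

Theorem theorem9 (R : realType) (d : nat) (x : 'I_d -> R) (jstar : 'I_d) :
  (0 < d)%N ->
  (forall j : 'I_d, `|x jstar - 2^-1| <= `|x j - 2^-1|) ->
  ~~ initial_stop x jstar ->
  forall n : nat,
    (forall k : nat, (k < n)%N -> loop_continues x jstar (loop_state x jstar k)) ->
    #|(loop_state x jstar n).1| != 1%N ->
    Sset x jstar (loop_state x jstar n).1 (loop_state x jstar n).2
      != (loop_state x jstar n).1.
Proof.
move=> hd _ _ n _ _.
have [ne hq] := @state_inv R d x jstar n hd.
exact: (@S_neq R d x jstar _ _ ne hq).
Qed.
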